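(* Let $n\ge2$, let $\pi$ be a permutation of $\{1,\dots,n\}$ and let $T_0$ be the tagged Kuhn simplex $[0,e_{\pi(1)},e_{\pi(1)}+e_{\pi(2)},\dots,e_{\pi(1)}+\dots+e_{\pi(n)}]_n$, where $e_1,\dots,e_n$ are the unit vectors of $\mathbb R^n$. Then every simplex $T$ obtained from $T_0$ by successive applications of Maubach's bisection satisfies $\gamma(T)\le2\gamma(T_0)$.
   Context: Maubach's bisection of a tagged simplex $[v_0,\dots,v_n]_\gamma$, $\gamma\in\{1,\dots,n\}$: with $v'=(v_0+v_\gamma)/2$ and $\gamma'=\gamma-1$ if $\gamma\ge2$, $\gamma'=n$ if $\gamma=1$, the children are $[v_0,\dots,v_{\gamma-1},v',v_{\gamma+1},\dots,v_n]_{\gamma'}$ and $[v_1,\dots,v_\gamma,v',v_{\gamma+1},\dots,v_n]_{\gamma'}$. For a simplex $S$, $\gamma(S)=R(S)/r(S)$ with $R(S)$ the diameter of the smallest ball containing $S$ and $r(S)$ the diameter of the largest ball contained in $S$. *)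

(* Defs.v *)
From HB Require Import structures.
From mathcomp Require Import all_boot all_order all_algebra all_fingroup.
From mathcomp Require Import classical_sets boolp reals.
Set Implicit Arguments. Unset Strict Implicit. Unset Printing Implicit Defensive.
Import Order.TTheory GRing.Theory Num.Theory.
Local Open Scope ring_scope.
Local Open Scope classical_set_scope.

Section Defs.
Variables (R : realType) (n : nat).

Definition enorm (x : 'rV[R]_n) : R := Num.sqrt (\sum_(i < n) x ord0 i ^+ 2).

Definition simplex := 'I_n.+1 -> 'rV[R]_n.

Definition hull (v : simplex) : set 'rV[R]_n :=
  [set x | exists l : 'I_n.+1 -> R, (forall i, 0 <= l i) /\
       \sum_(i < n.+1) l i = 1 /\ x = \sum_(i < n.+1) l i *: v i].

Definition cball (c : 'rV[R]_n) (rho : R) : set 'rV[R]_n :=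
  [set x | enorm (x - c) <= rho].

Definition outer_diam (v : simplex) : R :=
  2 * inf [set rho | 0 <= rho /\ exists c, hull v `<=` cball c rho].

Definition inner_diam (v : simplex) : R :=
  2 * sup [set rho | 0 <= rho /\ exists c, cball c rho `<=` hull v].

Definition gamma (v : simplex) : R := outer_diam v / inner_diam v.

(* tagged simplex [v_0,...,v_n]_g, tag g in {1,...,n} *)
Definition tsimplex := (simplex * nat)%type.

Definition new_tag (g : nat) : nat := if (2 <= g)%N then g.-1 else n.

Definition midv (v : simplex) (g : nat) : 'rV[R]_n :=
  (2%:R)^-1 *: (v ord0 + v (inord g)).

Definition child1 (T : tsimplex) : tsimplex :=
  (fun i : 'I_n.+1 => if val i == T.2 then midv T.1 T.2 else T.1 i, new_tag T.2).

Definition child2 (T : tsimplex) : tsimplex :=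
  (fun i : 'I_n.+1 => if (val i < T.2)%N then T.1 (inord i.+1)
                      else if val i == T.2 then midv T.1 T.2 else T.1 i,
   new_tag T.2).

Inductive maubach_desc (T : tsimplex) : tsimplex -> Prop :=
  | md_refl : maubach_desc T T
  | md_child1 T' : maubach_desc T T' -> maubach_desc T (child1 T')
  | md_child2 T' : maubach_desc T T' -> maubach_desc T (child2 T').

Definition unitv (i : 'I_n) : 'rV[R]_n := delta_mx 0 i.

Definition kuhn (p : 'S_n) : simplex :=
  fun k => \sum_(j < n | (j < k)%N) unitv (p j).

End Defs.

(* Main.v *)
Require Import Defs.
From mathcomp Require Import all_boot all_order all_algebra all_fingroup.
From mathcomp Require Import classical_sets boolp reals.
From mathcomp Require Import ring lra zify.
Import Order.TTheory GRing.Theory Num.Theory.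
Local Open Scope ring_scope.
Local Open Scope classical_set_scope.
Set Implicit Arguments. Unset Strict Implicit. Unset Printing Implicit Defensive.


Section Gen.
Variables (R : realType) (n : nat).
Implicit Types (x y : 'rV[R]_n) (v w : simplex R n).

Lemma enorm_ge0 x : 0 <= enorm x.
Proof. exact: sqrtr_ge0. Qed.

Lemma enorm_coord x i : `|x 0 i| <= enorm x.
Proof.
rewrite /enorm -sqrtr_sqr ler_sqrt; last by apply: sumr_ge0 => j _; apply: sqr_ge0.
rewrite (bigD1 i) //= lerDl; apply: sumr_ge0 => j _; apply: sqr_ge0.
Qed.

Lemma enorm_eq0 x : enorm x <= 0 -> x = 0.
Proof.
move=> h; apply/matrixP => i j; rewrite (ord1 i) mxE.
apply/normr0_eq0/eqP; rewrite eq_le normr_ge0 andbT.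
exact: le_trans (enorm_coord _ _) h.
Qed.

Lemma enorm_le x M : 0 <= M -> (forall i, `|x 0 i| <= M) -> enorm x <= n%:R * M.
Proof.
move=> M0 h; rewrite /enorm -(ger0_norm (_ : 0 <= n%:R * M)); last by apply: mulr_ge0.
rewrite -sqrtr_sqr ler_sqrt; last exact: sqr_ge0.
apply: (@le_trans _ _ (\sum_(i < n) M ^+ 2)).
  apply: ler_sum => i _; have := h i; rewrite ler_norml => /andP[a b].
  nra.
rewrite sumr_const card_ord -mulr_natl.
have h1 : n%:R <= n%:R ^+ 2 :> R.
  by rewrite -natrX ler_nat; case: (n) => [|m] //; rewrite expnS leq_pmulr // expn_gt0.
have h2 : 0 <= M ^+ 2 by apply: sqr_ge0.
rewrite exprMn; nra.
Qed.

Lemma enorm_opp x : enorm (- x) = enorm x.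
Proof. by rewrite /enorm; congr Num.sqrt; apply: eq_bigr => i _; rewrite mxE sqrrN. Qed.

Lemma enorm_delta (i0 : 'I_n) (r : R) : 0 <= r -> enorm (r *: delta_mx 0 i0) = r.
Proof.
move=> r0; rewrite /enorm (bigD1 i0) //= big1 => [|j /negbTE ji].
  by rewrite addr0 !mxE eqxx /= mulr1 sqrtr_sqr ger0_norm.
by rewrite !mxE eq_sym ji /= mulr0 expr2 mulr0.
Qed.

Lemma sum_pred1 (V : lmodType R) (F : 'I_n.+1 -> V) k :
  \sum_j (j == k)%:R *: F j = F k.
Proof.
rewrite (bigD1 k) //= big1 => [|j /negbTE ->]; last by rewrite scale0r.
by rewrite eqxx scale1r addr0.
Qed.

Lemma sum_pred1r (F : 'I_n.+1 -> R) k : \sum_j (j == k)%:R * F j = F k.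
Proof. exact: (sum_pred1 (V := R^o)). Qed.

Lemma hull_vertex v k : hull v (v k).
Proof.
exists (fun j => (j == k)%:R); split; first by move=> j; rewrite ler0n.
split; last by rewrite sum_pred1.
by rewrite (bigD1 k) //= big1 => [|j /negbTE ->]; rewrite ?eqxx ?addr0.
Qed.

Lemma hull_mid v k : hull v (2%:R^-1 *: (v ord0 + v k)).
Proof.
exists (fun j => 2%:R^-1 * (j == ord0)%:R + 2%:R^-1 * (j == k)%:R); split.
  by move=> j; apply: addr_ge0; apply: mulr_ge0; rewrite ?invr_ge0 ?ler0n.
split.
  rewrite big_split /= -!mulr_sumr.
  have e : forall k0 : 'I_n.+1, \sum_(j < n.+1) (j == k0)%:R = 1 :> R.
    by move=> k0; rewrite (bigD1 k0) //= big1 => [|j /negbTE ->]; rewrite ?eqxx ?addr0.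
  by rewrite !e !mulr1 -mulr2n -[_ *+ 2]mulr_natr mulVf // pnatr_eq0.
under eq_bigr do rewrite scalerDl -!scalerA.
by rewrite big_split /= -!scaler_sumr !sum_pred1 scalerDr.
Qed.

Lemma hull_sub v w : (forall k, hull w (v k)) -> hull v `<=` hull w.
Proof.
move=> h; have [m hm] := choice h.
move=> x [l [l0 [l1 ->]]].
exists (fun j => \sum_k l k * m k j); split.
  by move=> j; apply: sumr_ge0 => k _; apply: mulr_ge0 => //; case: (hm k).
split.
  rewrite exchange_big /=; under eq_bigr do rewrite -mulr_sumr.
  by rewrite -l1; apply: eq_bigr => k _; case: (hm k) => _ [-> _]; rewrite mulr1.
symmetry; under eq_bigr do rewrite scaler_suml.
rewrite exchange_big /=; apply: eq_bigr => k _.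
case: (hm k) => _ [_ ->]; rewrite scaler_sumr; apply: eq_bigr => j _.
by rewrite scalerA.
Qed.

Definition Mb v i := \sum_k `|v k 0 i|.

Lemma hull_coord v x i : hull v x -> `|x 0 i| <= Mb v i.
Proof.
move=> [l [l0 [l1 ->]]]; rewrite summxE.
apply: le_trans (ler_norm_sum _ _ _) _; apply: ler_sum => k _.
rewrite mxE normrM (ger0_norm (l0 k)) ler_piMl //.
rewrite -l1 (bigD1 k) //= lerDl; apply: sumr_ge0 => j _; exact: l0.
Qed.

Definition Mt v := \sum_i Mb v i.

Lemma Mb_ge0 v i : 0 <= Mb v i.
Proof. by apply: sumr_ge0 => k _. Qed.

Lemma Mb_le v i : Mb v i <= Mt v.
Proof. by rewrite /Mt (bigD1 i) //= lerDl; apply: sumr_ge0 => j _; apply: Mb_ge0. Qed.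

Definition Eout v := [set rho | 0 <= rho /\ exists c, hull v `<=` cball c rho].
Definition Ein v := [set rho | 0 <= rho /\ exists c, cball c rho `<=` hull v].

Lemma Eout_n0 v : Eout v !=set0.
Proof.
exists (n%:R * Mt v); split; first by apply: mulr_ge0; rewrite ?ler0n // sumr_ge0 // => i _; apply: Mb_ge0.
exists 0 => x hx; rewrite /cball /= subr0; apply: enorm_le.
  by apply: sumr_ge0 => i _; apply: Mb_ge0.
by move=> i; apply: le_trans (hull_coord i hx) (Mb_le _ _).
Qed.

Lemma Ein_n0 v : Ein v !=set0.
Proof.
exists 0; split => //; exists (v ord0) => x hx.
have -> : x = v ord0 by apply/eqP; rewrite -subr_eq0; apply/eqP/enorm_eq0.
exact: hull_vertex.
Qed.

Lemma Ein_ub v (i0 : 'I_n) : ubound (Ein v) (Mb v i0).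
Proof.
move=> r [r0 [c hc]].
have m1 : cball c r (c + r *: delta_mx 0 i0).
  by rewrite /cball /= addrAC subrr add0r enorm_delta.
have m2 : cball c r (c - r *: delta_mx 0 i0).
  by rewrite /cball /= addrAC subrr add0r enorm_opp enorm_delta.
have := hull_coord i0 (hc _ m1); have := hull_coord i0 (hc _ m2).
rewrite !mxE eqxx /= ?mulr1 !ler_norml => /andP[a1 a2] /andP[b1 b2].
rewrite eqxx mulr1 in a1 a2 b1 b2; lra.
Qed.

Lemma Eout_lb v : lbound (Eout v) 0.
Proof. by move=> r [] . Qed.

Lemma outer_ge0 v : 0 <= outer_diam v.
Proof.
rewrite /outer_diam mulr_ge0 //; apply: lb_le_inf; first exact: Eout_n0.
exact: Eout_lb.
Qed.

Lemma outer_transport v w s : 0 < s ->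
  (forall r, Eout v r -> Eout w (s * r)) -> outer_diam w <= s * outer_diam v.
Proof.
move=> s0 h; rewrite /outer_diam mulrCA ler_pM2l //.
rewrite -ler_pdivrMl //; apply: lb_le_inf; first exact: Eout_n0.
move=> r hr; rewrite ler_pdivrMl //.
apply: ge_inf; [by exists 0; exact: Eout_lb | exact: h].
Qed.

Lemma inner_transport v w s (i0 : 'I_n) : 0 < s ->
  (forall r, Ein v r -> Ein w (s * r)) -> s * inner_diam v <= inner_diam w.
Proof.
move=> s0 h; rewrite /inner_diam mulrCA ler_pM2l //.
rewrite -ler_pdivlMl //; apply: ge_sup; first exact: Ein_n0.
move=> r hr; rewrite ler_pdivlMl //.
apply: ub_le_sup; [by exists (Mb w i0); exact: Ein_ub | exact: h].
Qed.

End Gen.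


Section Phi.
Variables (R : realType) (n : nat).
Implicit Types (x y : 'rV[R]_n) (v w : simplex R n).

Definition Kf (a : 'rV[R]_n) (s : R) (rho : 'S_n) (sg : 'I_n -> R) : simplex R n :=
  fun k => \row_i (a 0 i + s * sg i * (rho i < k)%:R).

Definition Phi (a : 'rV[R]_n) (s : R) (sg : 'I_n -> R) (tau : 'S_n) y : 'rV[R]_n :=
  \row_i (a 0 i + s * sg i * y 0 (tau i)).

Variables (a : 'rV[R]_n) (s : R) (sg : 'I_n -> R) (tau : 'S_n).
Hypothesis s0 : 0 < s.
Hypothesis sg2 : forall i, sg i ^+ 2 = 1.

Lemma Phi_affine (l : 'I_n.+1 -> R) v : \sum_k l k = 1 ->
  Phi a s sg tau (\sum_k l k *: v k) = \sum_k l k *: Phi a s sg tau (v k).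
Proof.
move=> l1; apply/matrixP => i j; rewrite (ord1 i) !mxE !summxE.
under eq_bigr do rewrite !mxE.
under [RHS]eq_bigr do rewrite !mxE.
under [RHS]eq_bigr do rewrite mulrDr.
rewrite big_split /= -mulr_suml l1 mul1r; congr (_ + _).
rewrite mulr_sumr; apply: eq_bigr => k _; ring.
Qed.

Lemma Phi_norm x y : enorm (Phi a s sg tau x - Phi a s sg tau y) = s * enorm (x - y).
Proof.
have e : \sum_i (Phi a s sg tau x - Phi a s sg tau y) 0 i ^+ 2
   = s ^+ 2 * \sum_i (x - y) 0 i ^+ 2.
  rewrite mulr_sumr [in RHS](reindex_inj (@perm_inj _ tau)) /=.
  apply: eq_bigr => i _; rewrite !mxE.
  have e : a 0 i + s * sg i * x 0 (tau i) - (a 0 i + s * sg i * y 0 (tau i))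
     = s * sg i * (x 0 (tau i) - y 0 (tau i)) by ring.
  by rewrite e !exprMn sg2 mulr1.
by rewrite /enorm e sqrtrM ?sqr_ge0 // sqrtr_sqr ger0_norm // ltW.
Qed.

Lemma Phi_surj x : exists y, Phi a s sg tau y = x.
Proof.
exists (\row_j ((x - a) 0 ((tau^-1)%g j) * sg ((tau^-1)%g j) / s)).
apply/matrixP => i j; rewrite (ord1 i) !mxE permK.
have e : s * sg j * ((x 0 j - a 0 j) * sg j / s) = sg j ^+ 2 * (x 0 j - a 0 j).
  by field; rewrite gt_eqF.
by rewrite e sg2 mul1r addrC subrK.
Qed.

Lemma Eout_Phi v w r : (forall k, w k = Phi a s sg tau (v k)) ->
  Eout v r -> Eout w (s * r).
Proof.
move=> hw [r0 [c hc]]; split; first by rewrite mulr_ge0 // ltW.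
exists (Phi a s sg tau c) => x [l [l0 [l1 ->]]].
have e : \sum_k l k *: w k = Phi a s sg tau (\sum_k l k *: v k).
  by rewrite Phi_affine //; apply: eq_bigr => k _; rewrite hw.
rewrite /cball /= e Phi_norm ler_pM2l //.
by apply: hc; exists l.
Qed.

Lemma Ein_Phi v w r : (forall k, w k = Phi a s sg tau (v k)) ->
  Ein v r -> Ein w (s * r).
Proof.
move=> hw [r0 [c hc]]; split; first by rewrite mulr_ge0 // ltW.
exists (Phi a s sg tau c) => x hx.
have [y ey] := Phi_surj x; subst x.
move: hx; rewrite /cball /= Phi_norm ler_pM2l // => hy.
have [l [l0 [l1 ->]]] := hc y hy.
exists l; split => //; split => //.
by rewrite Phi_affine //; apply: eq_bigr => k _; rewrite hw.
Qed.

End Phi.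

Section Incl.
Variables (R : realType) (n : nat).
Implicit Types (v w : simplex R n).

Lemma Eout_incl v w r : hull v `<=` hull w -> Eout w r -> Eout v r.
Proof. by move=> h [r0 [c hc]]; split => //; exists c => x /h /hc. Qed.

Lemma Ein_incl v w r : hull v `<=` hull w -> Ein v r -> Ein w r.
Proof. by move=> h [r0 [c hc]]; split => //; exists c => x /hc /h. Qed.

End Incl.


Section Kuhn.
Variables (R : realType) (n : nat) (p : 'S_n).

Lemma kuhn_coord (k : 'I_n.+1) i : @kuhn R n p k 0 i = ((p^-1)%g i < k)%:R.
Proof.
rewrite /kuhn summxE.
rewrite (eq_bigr (fun j : 'I_n => (j == (p^-1)%g i)%:R)); last first.
  move=> j _; rewrite !mxE eqxx /=; congr (_%:R); congr (nat_of_bool _).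
  by apply/idP/idP => /eqP ->; rewrite ?permK ?permKV.
rewrite big_mkcond /= (bigD1 ((p^-1)%g i)) //= eqxx big1 ?addr0.
  by case: ifP.
by move=> j /negbTE ->; case: ifP.
Qed.

End Kuhn.

Section KuhnPos.
Variables (R : realType) (m : nat) (p : 'S_m.+1).
Local Notation n := m.+1.

Lemma sum_tele (Q : nat -> R) (a b : nat) : (a <= b)%N ->
  \sum_(a <= k < b) (Q k - Q k.+1) = Q a - Q b.
Proof.
move=> ab; rewrite -[LHS]opprK -sumrN.
under eq_bigr do rewrite opprB.
by rewrite telescope_sumr // opprB.
Qed.

Lemma Ein_kuhn : Ein (@kuhn R n p) (2%:R * (n.+1)%:R)^-1.
Proof.
set N : R := n%:R.
have N0 : 0 < N + 1 by rewrite /N natr1 ltr0n.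
set u := (N + 1)^-1.
have hu : u * (N + 1) = 1 by rewrite mulVf // gt_eqF.
have u0 : 0 < u by rewrite invr_gt0.
have -> : (2%:R * (n.+1)%:R)^-1 = u / 2 by rewrite /u /N natr1 invfM mulrC.
split; first by rewrite divr_ge0 // ltW.
pose c : 'rV[R]_n := \row_i ((N - ((p^-1)%g i)%:R) * u).
exists c => x hx.
pose X t := x 0 (p (inord t)).
have hX : forall t, (t < n)%N -> `|X t - (N - t%:R) * u| <= u / 2.
  move=> t tn; apply: le_trans hx; apply: le_trans (enorm_coord _ (p (inord t))).
  by rewrite !mxE permK inordK.
pose Q t := if t == 0%N then 1 else if (t <= n)%N then X t.-1 else 0.
exists (fun k : 'I_n.+1 => Q k - Q k.+1); split.
  have hN : N = m%:R + 1 by rewrite /N natr1.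
  have bnd : forall t, (t < n)%N -> (N - t%:R) * u - u / 2 <= X t <= (N - t%:R) * u + u / 2.
    by move=> t tn; have := hX t tn; rewrite ler_norml => /andP[a b]; apply/andP; split; lra.
  move=> [k hk] /=; rewrite /Q /=.
  case: k hk => [|k] hk /=.
    have := bnd 0%N isT; rewrite subr0.
    have e : N * u = 1 - u by rewrite -hu; ring.
    rewrite e => /andP[a b]; lra.
  rewrite -ltnS hk.
  case: ifP => hk2.
    have := bnd k (ltnW hk2); have := bnd k.+1 hk2.
    have e : (N - k.+1%:R) * u = (N - k%:R) * u - u by rewrite -natr1; ring.
    rewrite e => /andP[a b] /andP[c1 d]; lra.
  have km : k = m by move: hk hk2; clear; lia.
  subst k; have := bnd m (ltnSn m).
  have e : (N - m%:R) * u = u by rewrite hN; ring.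
  rewrite e => /andP[a b]; lra.
split.
  rewrite -(big_mkord xpredT (fun k => Q k - Q k.+1)) sum_tele //.
  by rewrite /Q /= ltnn subr0.
apply/matrixP => i j; rewrite (ord1 i) summxE.
under eq_bigr do rewrite mxE kuhn_coord.
rewrite -(big_mkord xpredT (fun k => (Q k - Q k.+1) * (((p^-1)%g j) < k)%:R)).
have tn : (((p^-1)%g j).+1 <= n.+1)%N by rewrite ltnS ltnW.
rewrite (@big_cat_nat _ _ _ ((p^-1)%g j).+1) //= big1_seq ?add0r; last first.
  move=> k /andP[_]; rewrite mem_index_iota => /andP[_ hk].
  by rewrite ltnNge -ltnS hk mulr0.
rewrite (eq_big_nat _ _ (F2 := fun k => Q k - Q k.+1)); last first.
  by move=> k /andP[hk _]; rewrite hk mulr1.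
rewrite sum_tele //= /Q /= ltnn subr0 ltn_ord /X inord_val permKV.
by [].
Qed.

End KuhnPos.

Section KuhnPos2.
Variables (R : realType) (m : nat) (p : 'S_m.+1).
Lemma inner_kuhn_pos : 0 < inner_diam (@kuhn R m.+1 p).
Proof.
rewrite /inner_diam mulr_gt0 //.
have hub : has_ubound (Ein (@kuhn R m.+1 p)).
  by exists (Mb (@kuhn R m.+1 p) ord0); apply: Ein_ub.
have := ub_le_sup hub (@Ein_kuhn R m p).
have : 0 < (2%:R * (m.+2)%:R)^-1 :> R by rewrite invr_gt0 mulr_gt0 // ltr0n.
move=> a b; exact: lt_le_trans a b.
Qed.
End KuhnPos2.


Ltac bcase := repeat (match goal with
 | |- context [if ?b then _ else _] =>
     lazymatch b with true => fail | false => fail | _ => let E := fresh "E" in case E: b end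
 | |- context [nat_of_bool ?b] =>
     lazymatch b with true => fail | false => fail | _ => let E := fresh "E" in case E: b end
 end).

Section Inv.
Variables (R : realType) (m : nat) (p : 'S_m.+1).
Local Notation n := m.+1.

Definition Tform (a : 'rV[R]_n) (s : R) (rho : 'S_n) (sg : 'I_n -> R) (g : nat) : simplex R n :=
  fun k => \row_i (a 0 i + (if (k <= g)%N then s else s / 2) * sg i * (rho i < k)%:R).

Definition Inv (T : tsimplex R n) := exists a s rho sg,
  [/\ 0 < s, (forall i, sg i ^+ 2 = 1), (1 <= T.2 <= n)%N &
      forall k, T.1 k = Tform a s rho sg T.2 k].

Lemma Inv_kuhn : Inv (@kuhn R n p, n).
Proof.
exists 0, 1, (p^-1)%g, (fun _ => 1); split => //=.
  by move=> _; rewrite expr1n.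
move=> k; apply/matrixP => i j; rewrite (ord1 i) !mxE kuhn_coord.
by rewrite (_ : (k <= n)%N) ?mulr1 ?mul1r ?add0r // -ltnS ltn_ord.
Qed.

Lemma Inv_child1 T : Inv T -> Inv (child1 T).
Proof.
case: T => v g [a [s [rho [sg [s0 sg2 /andP[g1 gn] hv]]]]].
have {hv} hv : forall k, v k = Tform a s rho sg g k := hv.
have {g1} g1 : (1 <= g)%N := g1.
have {gn} gn : (g <= n)%N := gn.
rewrite /child1 /new_tag /=.
case: ifP => g2.
  exists a, s, rho, sg; split => //=.
    by rewrite -subn1; apply/andP; split; lia.
  move=> k; apply/matrixP => i j; rewrite (ord1 i) /midv.
  rewrite (hv ord0) (hv (inord g)) (hv k) [LHS](fun_if (fun M : 'rV[R]_n => M 0 j)) !mxE inordK; last by lia.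
  have := ltn_ord k; have := ltn_ord (rho j).
  bcase => //= *; first [lia | by field].
exists a; exists (s / 2); exists rho; exists sg; split => //=.
  by rewrite divr_gt0.
move=> k; apply/matrixP => i j; rewrite (ord1 i) /midv.
rewrite (hv ord0) (hv (inord g)) (hv k) [LHS](fun_if (fun M : 'rV[R]_n => M 0 j)) !mxE inordK; last by lia.
have := ltn_ord k; have := ltn_ord (rho j).
bcase => //= *; first [lia | by field].
Qed.

Definition cfun (g : nat) (j : 'I_n) : 'I_n :=
  inord (if nat_of_ord j == 0%N then g.-1 else if (nat_of_ord j < g)%N then (nat_of_ord j).-1 else nat_of_ord j).

Lemma cfunE g j : (1 <= g <= n)%N ->
  nat_of_ord (cfun g j) = (if nat_of_ord j == 0%N then g.-1 else if (nat_of_ord j < g)%N then (nat_of_ord j).-1 else nat_of_ord j).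
Proof.
move=> /andP[g1 gn]; rewrite /cfun inordK //.
have := ltn_ord j; rewrite -!subn1; bcase => //= *; lia.
Qed.

Lemma cfun_inj g : (1 <= g <= n)%N -> injective (cfun g).
Proof.
move=> hg j1 j2 /(congr1 (@nat_of_ord n)); rewrite !cfunE //.
move: hg => /andP[g1 gn].
have := ltn_ord j1; have := ltn_ord j2; rewrite -!subn1.
bcase => //= *; apply: ord_inj; lia.
Qed.

Lemma Inv_child2 T : Inv T -> Inv (child2 T).
Proof.
case: T => v g [a [s [rho [sg [s0 sg2 /andP[g1 gn] hv]]]]].
have {hv} hv : forall k, v k = Tform a s rho sg g k := hv.
have {g1} g1 : (1 <= g)%N := g1.
have {gn} gn : (g <= n)%N := gn.
have hg : (1 <= g <= n)%N by rewrite g1 gn.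
rewrite /child2 /new_tag /=.
pose a' : 'rV[R]_n := \row_i (a 0 i + s * sg i * (rho i < 1)%:R).
pose sg' i := if nat_of_ord (rho i) == 0%N then - sg i else sg i.
pose rho' := (rho * perm (cfun_inj hg))%g.
have sg2' : forall i, sg' i ^+ 2 = 1 by move=> i; rewrite /sg'; case: ifP; rewrite ?sqrrN sg2.
have hrho : forall i, nat_of_ord (rho' i) = (if nat_of_ord (rho i) == 0%N then g.-1
   else if (nat_of_ord (rho i) < g)%N then (nat_of_ord (rho i)).-1 else nat_of_ord (rho i)).
  by move=> i; rewrite /rho' permM permE cfunE.
case: ifP => g2.
  exists a'; exists s; exists rho'; exists sg'; split => //=.
    by rewrite -subn1; apply/andP; split; lia.
  move=> k; apply/matrixP => i j; rewrite (ord1 i) /midv.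
  case: (ltnP k g) => hkg /=.
    rewrite (hv (inord k.+1)) !mxE hrho /sg' inordK; last by lia.
    have := ltn_ord k; have := ltn_ord (rho j); rewrite -!subn1.
    bcase => //= *; first [lia | by field].
  rewrite (hv ord0) (hv (inord g)) (hv k) !(fun_if (fun M : 'rV[R]_n => M 0 j)) !mxE hrho /sg' inordK; last by lia.
  have := ltn_ord k; have := ltn_ord (rho j); rewrite -!subn1.
  bcase => //= *; first [lia | by field].
exists a'; exists (s / 2); exists rho'; exists sg'; split => //=.
  by rewrite divr_gt0.
move=> k; apply/matrixP => i j; rewrite (ord1 i) /midv.
case: (ltnP k g) => hkg /=.
  rewrite (hv (inord k.+1)) !mxE hrho /sg' inordK; last by lia.
  have := ltn_ord k; have := ltn_ord (rho j); rewrite -!subn1.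
  bcase => //= *; first [lia | by field].
rewrite (hv ord0) (hv (inord g)) (hv k) !(fun_if (fun M : 'rV[R]_n => M 0 j)) !mxE hrho /sg' inordK; last by lia.
have := ltn_ord k; have := ltn_ord (rho j); rewrite -!subn1.
bcase => //= *; first [lia | by field].
Qed.

End Inv.


Section Final.
Variables (R : realType) (m : nat) (p : 'S_m.+1).
Local Notation n := m.+1.

Lemma Inv_desc (T : tsimplex R n) : maubach_desc (@kuhn R n p, n) T -> Inv T.
Proof.
elim => [|T' _ IH|T' _ IH]; [exact: Inv_kuhn | exact: Inv_child1 | exact: Inv_child2].
Qed.

Lemma Kf_Phi a s rho sg k :
  Kf a s rho sg k = Phi a s sg (rho * p)%g (@kuhn R n p k).
Proof.
apply/matrixP => i j; rewrite (ord1 i) !mxE kuhn_coord permM permK.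
by [].
Qed.

Lemma gamma_Inv (T : tsimplex R n) : Inv T -> gamma T.1 <= 2 * gamma (@kuhn R n p).
Proof.
case: T => v g [a [s [rho [sg [s0 sg2 /andP[g1 gn] hv]]]]].
have {hv} hv : forall k, v k = Tform a s rho sg g k := hv.
rewrite /=.
have hbig : hull v `<=` hull (Kf a s rho sg).
  apply: hull_sub => k; case: (leqP k g) => hk.
    have -> : v k = Kf a s rho sg k.
      by apply/matrixP => i j; rewrite hv !mxE hk.
    exact: hull_vertex.
  have -> : v k = 2%:R^-1 *: (Kf a s rho sg ord0 + Kf a s rho sg k).
    apply/matrixP => i j; by rewrite hv !mxE leqNgt hk /=; field.
  exact: hull_mid.
have hsmall : hull (Kf a (s / 2) rho sg) `<=` hull v.
  apply: hull_sub => k; case: (leqP k g) => hk.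
    have -> : Kf a (s / 2) rho sg k = 2%:R^-1 *: (v ord0 + v k).
      by apply/matrixP => i j; rewrite !hv !mxE hk /=; field.
    exact: hull_mid.
  have -> : Kf a (s / 2) rho sg k = v k.
    by apply/matrixP => i j; rewrite hv !mxE (leqNgt k g) hk.
  exact: hull_vertex.
have s2 : 0 < s / 2 by rewrite divr_gt0.
have hout : outer_diam v <= s * outer_diam (@kuhn R n p).
  apply: outer_transport => // r hr; apply: (Eout_incl hbig).
  by apply: (Eout_Phi (tau := (rho * p)%g) s0 sg2) hr => k; rewrite Kf_Phi.
have hin : s / 2 * inner_diam (@kuhn R n p) <= inner_diam v.
  apply: (inner_transport ord0) => // r hr; apply: (Ein_incl hsmall).
  by apply: (Ein_Phi (tau := (rho * p)%g) s2 sg2) hr => k; rewrite Kf_Phi.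
have i0 := @inner_kuhn_pos R m p.
have o0 := outer_ge0 (@kuhn R n p).
have iv : 0 < inner_diam v by apply: lt_le_trans hin; rewrite mulr_gt0.
rewrite /gamma ler_pdivrMr //.
apply: le_trans hout _.
have e : s * outer_diam (@kuhn R n p) = 2 * (outer_diam (@kuhn R n p) / inner_diam (@kuhn R n p)) * (s / 2 * inner_diam (@kuhn R n p)).
  by field; rewrite gt_eqF.
rewrite e.
apply: ler_wpM2l => //; apply: mulr_ge0 => //; apply: divr_ge0 => //; exact: ltW.
Qed.

End Final.

Unset Implicit Arguments.
Local Close Scope classical_set_scope.

Theorem lemmaA2 (R : realType) (n : nat) (hn : (2 <= n)%N) (p : 'S_n)
  (T : tsimplex R n) :
  maubach_desc (@kuhn R n p, n) T ->
  gamma T.1 <= 2 * gamma (@kuhn R n p).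
Proof.
case: n hn p T => [|m] // hn p T hT.
exact: gamma_Inv (Inv_desc hT).
Qed.
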